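(* $\mathrm{para}\text{-}\mathrm{LOGCFL}/\mathrm{poly}\cap\mathrm{PHSP}\subseteq\mathrm{para}\text{-}\mathrm{LOGDCFL}/\mathrm{poly}$ if and only if $\mathrm{LOGCFL}/\mathrm{poly}\subseteq\mathrm{LOGDCFL}/\mathrm{poly}$.
   Context: $\mathrm{FL}/\mathrm{poly}$: functions computable by a deterministic Turing machine with read-only input tape, read-only two-way advice tape holding $h(|x|)$ for an arbitrary advice function $h$ with $|h(n)|\le n^{O(1)}$, work tape and write-once output tape, in polynomial time with $O(\log|x|)$ work space. $\mathrm{LOGCFL}/\mathrm{poly}$ (resp. $\mathrm{LOGDCFL}/\mathrm{poly}$): languages $L$ with $x\in L\iff f(x)\in B$ for some $f\in\mathrm{FL}/\mathrm{poly}$ and some context-free (resp. deterministic context-free) $B$. A parameterized decision problem is a pair $(L,m)$ with $L\subseteq\Sigma^*$ and size parameter $m:\Sigma^*\to\mathbb{N}$. $(f,m)\in\mathrm{para}\text{-}\mathrm{FL}/\mathrm{poly}$ if $m$ is logarithmic-space computable ($x\mapsto1^{m(x)}$ computable in polynomial time with logarithmic work space) and there are an advised deterministic Turing machine $M$, an advice function $h$ and a polynomial $p$ with $|h(|x|)|\le p(m(x)|x|)$ such that $M$ on input $x$ with advice $h(|x|)$ outputs $f(x)$ within time $p(m(x)|x|)$ using space $O(\log(m(x)|x|))$. $\mathrm{para}\text{-}\mathrm{LOGCFL}/\mathrm{poly}$ (resp. $\mathrm{para}\text{-}\mathrm{LOGDCFL}/\mathrm{poly}$): the $(L,m)$ such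 that for some $f$ with $(f,m)\in\mathrm{para}\text{-}\mathrm{FL}/\mathrm{poly}$ and a context-free (resp. deterministic context-free) $A$, $L=\{x\mid f(x)\in A\}$. $\mathrm{PHSP}$ is the collection of parameterized decision problems $(L,m)$ whose size parameter $m$ is polynomially honest: $|x|\le p(m(x))$ for some polynomial $p$ and all $x$. *)

(* Defs.v *)
From mathcomp Require Import all_boot.
Set Implicit Arguments. Unset Strict Implicit. Unset Printing Implicit Defensive.

(* Every polynomial is bounded by some c*n^k+c and conversely, so for  *)
(* upper bounds "some polynomial p" is equivalent to "some c, k".     *)
Definition pbound (c k n : nat) : nat := c * n ^ k + c.

Definition logbound (c n : nat) : nat := c * trunc_log 2 n + c.

(* Deterministic Turing machines with read-only input tape, read-only  *)
(* two-way advice tape, one work tape and a write-once output tape.    *)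
Inductive move := MvL | MvS | MvR.

(* Σ : input alphabet, Γ : output alphabet, A : advice alphabet *)
Record TM (Σ Γ A : finType) := {
  tm_state : finType;
  tm_work  : finType;
  tm_blank : tm_work;
  tm_start : tm_state;
  tm_halt  : tm_state -> bool;
  (* state, input symbol (None = endmarker), advice symbol (None = endmarker),
     work symbol  |->  new state, input move, advice move, written work symbol,
     work move, symbol appended to the (write-once, right-moving) output tape *)
  tm_delta : tm_state -> option Σ -> option A -> tm_work ->
             tm_state * move * move * tm_work * move * option Γ
}.

Record tm_config (Σ Γ A : finType) (M : TM Σ Γ A) := TMConfig {
  cf_state : tm_state M;
  cf_ipos  : nat;                  (* 0 and |x|+1 are the endmarkers *)
  cf_apos  : nat;                  (* 0 and |a|+1 are the endmarkers *)
  cf_wpos  : nat;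
  cf_wtape : nat -> tm_work M;
  cf_out   : seq Γ
}.

Definition read_tape (T : Type) (s : seq T) (i : nat) : option T :=
  if i == 0 then None else onth s i.-1.

Definition move_ro (d : move) (i bound : nat) : nat :=
  match d with MvL => i.-1 | MvS => i | MvR => minn i.+1 bound end.

Definition move_w (d : move) (i : nat) : nat :=
  match d with MvL => i.-1 | MvS => i | MvR => i.+1 end.

Definition tm_step (Σ Γ A : finType) (M : TM Σ Γ A) (x : seq Σ) (a : seq A)
    (c : tm_config M) : tm_config M :=
  if tm_halt (cf_state c) then c else
  let '(q, di, da, wsym, dw, o) :=
      tm_delta (cf_state c) (read_tape x (cf_ipos c)) (read_tape a (cf_apos c))
               (cf_wtape c (cf_wpos c)) in
  TMConfig q (move_ro di (cf_ipos c) (size x).+1)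
             (move_ro da (cf_apos c) (size a).+1)
             (move_w dw (cf_wpos c))
             (fun j => if j == cf_wpos c then wsym else cf_wtape c j)
             (cf_out c ++ (if o is Some g then [:: g] else [::])).

Definition tm_init (Σ Γ A : finType) (M : TM Σ Γ A) : tm_config M :=
  TMConfig (tm_start M) 0 0 0 (fun _ => tm_blank M) [::].

Definition tm_run (Σ Γ A : finType) (M : TM Σ Γ A) (x : seq Σ) (a : seq A)
    (t : nat) : tm_config M :=
  iter t (tm_step x a) (tm_init M).

Definition computes_within (Σ Γ A : finType) (M : TM Σ Γ A) (x : seq Σ)
    (a : seq A) (y : seq Γ) (T S : nat) : Prop :=
  exists t, [/\ t <= T,
    tm_halt (cf_state (tm_run M x a t)),
    cf_out (tm_run M x a t) = y &
    forall t', t' <= t -> cf_wpos (tm_run M x a t') < S].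

Definition FL_poly (Σ Γ : finType) (f : seq Σ -> seq Γ) : Prop :=
  exists (A : finType) (M : TM Σ Γ A) (h : nat -> seq A) (c k : nat),
    (forall n, size (h n) <= pbound c k n) /\
    forall x, computes_within M x (h (size x)) (f x)
                (pbound c k (size x)) (logbound c (size x)).

Definition logspace_computable (Σ : finType) (m : seq Σ -> nat) : Prop :=
  exists (M : TM Σ unit bool) (c k : nat),
    forall x, computes_within M x [::] (nseq (m x) tt)
                (pbound c k (size x)) (logbound c (size x)).

Definition para_FL_poly (Σ Γ : finType) (f : seq Σ -> seq Γ)
    (m : seq Σ -> nat) : Prop :=
  logspace_computable m /\
  exists (A : finType) (M : TM Σ Γ A) (h : nat -> seq A) (c k : nat),
    (forall x, size (h (size x)) <= pbound c k (m x * size x)) /\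
    forall x, computes_within M x (h (size x)) (f x)
                (pbound c k (m x * size x)) (logbound c (m x * size x)).

Record CFG (Γ : finType) := {
  cfg_nt    : finType;
  cfg_start : cfg_nt;
  cfg_rules : seq (cfg_nt * seq (cfg_nt + Γ))
}.

Inductive derives (Γ : finType) (G : CFG Γ) : cfg_nt G -> seq Γ -> Prop :=
| der_rule (X : cfg_nt G) rhs w :
    (X, rhs) \in cfg_rules G -> derives_seq rhs w -> derives X w
with derives_seq (Γ : finType) (G : CFG Γ) : seq (cfg_nt G + Γ) -> seq Γ -> Prop :=
| ds_nil : derives_seq [::] [::]
| ds_term (a : Γ) rhs w :
    derives_seq rhs w -> derives_seq (inr a :: rhs) (a :: w)
| ds_nt (X : cfg_nt G) rhs u w :
    derives X u -> derives_seq rhs w -> derives_seq (inl X :: rhs) (u ++ w).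

Arguments derives {Γ} G _ _.
Arguments derives_seq {Γ} G _ _.

Definition context_free (Γ : finType) (B : seq Γ -> Prop) : Prop :=
  exists G : CFG Γ, forall w, B w <-> derives G (cfg_start G) w.

Record DPDA (Γ : finType) := {
  pda_state  : finType;
  pda_stack  : finType;
  pda_start  : pda_state;
  pda_bottom : pda_stack;
  pda_final  : pda_state -> bool;
  pda_delta  : pda_state -> option Γ -> pda_stack ->
               option (pda_state * seq pda_stack);
  pda_det    : forall q z, pda_delta q None z != None ->
               forall a, pda_delta q (Some a) z = None
}.

Definition pda_config (Γ : finType) (P : DPDA Γ) : Type :=
  (pda_state P * seq Γ * seq (pda_stack P))%type.

Inductive pda_step (Γ : finType) (P : DPDA Γ) :
    pda_config P -> pda_config P -> Prop :=
| ps_eps q w z s p g :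
    pda_delta q None z = Some (p, g) ->
    pda_step (q, w, z :: s) (p, w, g ++ s)
| ps_read q a w z s p g :
    pda_delta q (Some a) z = Some (p, g) ->
    pda_step (q, a :: w, z :: s) (p, w, g ++ s).

Inductive pda_reach (Γ : finType) (P : DPDA Γ) :
    pda_config P -> pda_config P -> Prop :=
| pr_refl c : pda_reach c c
| pr_step c1 c2 c3 : pda_step c1 c2 -> pda_reach c2 c3 -> pda_reach c1 c3.

Arguments pda_step {Γ} P _ _.
Arguments pda_reach {Γ} P _ _.

Definition dpda_accepts (Γ : finType) (P : DPDA Γ) (w : seq Γ) : Prop :=
  exists p s, pda_reach P (pda_start P, w, [:: pda_bottom P]) (p, [::], s)
              /\ pda_final p.

Definition det_context_free (Γ : finType) (B : seq Γ -> Prop) : Prop :=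
  exists P : DPDA Γ, forall w, B w <-> dpda_accepts P w.

Definition LOGCFL_poly (Σ : finType) (L : seq Σ -> Prop) : Prop :=
  exists (Γ : finType) (f : seq Σ -> seq Γ) (B : seq Γ -> Prop),
    FL_poly f /\ context_free B /\ forall x, L x <-> B (f x).

Definition LOGDCFL_poly (Σ : finType) (L : seq Σ -> Prop) : Prop :=
  exists (Γ : finType) (f : seq Σ -> seq Γ) (B : seq Γ -> Prop),
    FL_poly f /\ det_context_free B /\ forall x, L x <-> B (f x).

Definition para_LOGCFL_poly (Σ : finType) (L : seq Σ -> Prop)
    (m : seq Σ -> nat) : Prop :=
  exists (Γ : finType) (f : seq Σ -> seq Γ) (B : seq Γ -> Prop),
    para_FL_poly f m /\ context_free B /\ forall x, L x <-> B (f x).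

Definition para_LOGDCFL_poly (Σ : finType) (L : seq Σ -> Prop)
    (m : seq Σ -> nat) : Prop :=
  exists (Γ : finType) (f : seq Σ -> seq Γ) (B : seq Γ -> Prop),
    para_FL_poly f m /\ det_context_free B /\ forall x, L x <-> B (f x).

Definition PHSP (Σ : finType) (L : seq Σ -> Prop) (m : seq Σ -> nat) : Prop :=
  exists c k, forall x, size x <= pbound c k (m x).

(* Main.v *)
Require Import Defs.
From mathcomp Require Import all_boot zify.
Module ArithM.

Lemma expn_mono m n e : m <= n -> m ^ e <= n ^ e.
Proof. case: e => [|e] //= H; by rewrite leq_exp2r. Qed.

Definition Q c k n := c * n.+1 ^ k.

Lemma pbound_mono c C k N N' : c <= C -> N <= N' -> pbound c k N <= pbound C k N'.
Proof.
move=> H1 H2; rewrite /pbound; apply: leq_add => //; apply: leq_mul => //.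
exact: expn_mono.
Qed.

Lemma logbound_mono c C N N' : c <= C -> N <= N' -> logbound c N <= logbound C N'.
Proof.
move=> H1 H2; rewrite /logbound; apply: leq_add => //; apply: leq_mul => //.
exact: leq_trunc_log.
Qed.

Lemma Q_mono c k N N' : N <= N' -> Q c k N <= Q c k N'.
Proof. move=> H; rewrite /Q leq_mul2l expn_mono ?orbT //. Qed.

Lemma pbound_Q c k n : pbound c k n <= Q (2 * c) k n.
Proof.
rewrite /pbound /Q.
have h1 : n ^ k <= n.+1 ^ k by apply: expn_mono.
have h2 : 1 <= n.+1 ^ k by rewrite expn_gt0.
nia.
Qed.

Lemma succ_exp n k : n.+1 ^ k <= 2 ^ k * n ^ k + 2 ^ k.
Proof.
case: n => [|n].
  rewrite exp1n; have := expn_gt0 2 k; lia.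
rewrite -expnMn; apply: leq_trans (leq_addr _ _); apply: expn_mono; lia.
Qed.

Lemma Q_pbound c k n : Q c k n <= pbound (c * 2 ^ k) k n.
Proof.
rewrite /Q /pbound; have := succ_exp n k.
move: (n.+1 ^ k) (2 ^ k) (n ^ k) => a b d H.
nia.
Qed.

Lemma Q_mul c k n : Q c k n * n <= Q c k.+1 n.
Proof. rewrite /Q expnS; nia. Qed.

Lemma Q_comp c k a b n :
  Q c k (Q a b n) <= Q (c * a.+1 ^ k) (b * k) n.
Proof.
rewrite /Q -mulnA leq_mul2l; apply/orP; right.
rewrite expnM -expnMn; apply: expn_mono.
have : 1 <= n.+1 ^ b by rewrite expn_gt0.
move: (n.+1 ^ b) => d; nia.
Qed.

Lemma pbound_poly c k a b : exists C K, forall n N, N <= Q a b n ->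
  pbound c k N <= pbound C K n.
Proof.
exists (2 * c * a.+1 ^ k * 2 ^ (b * k)), (b * k) => n N H.
apply: (leq_trans (pbound_Q c k N)).
apply: (leq_trans (@Q_mono (2 * c) k _ _ H)).
apply: (leq_trans (Q_comp _ _ _ _ _)).
exact: Q_pbound.
Qed.

Lemma logbound_poly c a k : exists C, forall n N, N <= Q a k n ->
  logbound c N <= logbound C n.
Proof.
exists (c * k + c * a + c * k + c) => n N H.
rewrite /logbound.
set l := trunc_log 2 n.
have Hl : n.+1 <= 2 ^ l.+1 by apply: trunc_log_ltn.
have HQ : Q a k n <= 2 ^ (a + k * l.+1).
  rewrite /Q expnD [k * _]mulnC expnM; apply: leq_mul.
    exact: ltnW (ltn_expl _ _).
  exact: expn_mono.
have Ht : trunc_log 2 N <= a + k * l.+1.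
  rewrite -[X in _ <= X](@trunc_expnK 2) //.
  apply: leq_trunc_log; exact: leq_trans H HQ.
nia.
Qed.
End ArithM.
Import ArithM.
Set Implicit Arguments. Unset Strict Implicit.
Module TMM.

Lemma out_size (Σ Γ A : finType) (M : TM Σ Γ A) x a t :
  size (cf_out (tm_run M x a t)) <= t.
Proof.
elim: t => [|t IH] //.
rewrite /tm_run iterS -/(tm_run M x a t) /tm_step.
case: (tm_halt _); first by apply: leq_trans IH _.
case: (tm_delta _ _ _ _) => [[[[[q di] da] w] dw] o] /=.
rewrite size_cat; case: o => [g|] /=; lia.
Qed.

Lemma cw_mono (Σ Γ A : finType) (M : TM Σ Γ A) x a y T S T' S' :
  T <= T' -> S <= S' -> computes_within M x a y T S -> computes_within M x a y T' S'.
Proof.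
move=> h1 h2 [t [h3 h4 h5 h6]]; exists t; split => //.
  exact: leq_trans h1.
move=> t' /h6 h; exact: leq_trans h h2.
Qed.

Lemma lc_bound (Σ : finType) (m : seq Σ -> nat) : logspace_computable m ->
  exists c k, forall x, m x <= pbound c k (size x).
Proof.
move=> [M [c [k H]]]; exists c, k => x.
have [t [h1 _ h3 _]] := H x.
have := @out_size _ _ _ M x [::] t; rewrite h3 size_nseq => h; exact: leq_trans h h1.
Qed.

Section SizeTM.
Variable Σ : finType.

Definition sz_delta (q : option bool) (i : option Σ) (a : option bool) (w : unit) :
  option bool * move * move * unit * move * option unit :=
  match q with
  | None => (Some false, MvR, MvS, tt, MvS, None)
  | Some false => match i with
                  | Some _ => (Some false, MvR, MvS, tt, MvS, Some tt)
                  | None => (Some true, MvS, MvS, tt, MvS, None)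
                  end
  | Some true => (Some true, MvS, MvS, tt, MvS, None)
  end.

Definition szTM : TM Σ unit bool :=
  {| tm_state := option bool; tm_work := unit; tm_blank := tt;
     tm_start := None; tm_halt := fun q => q == Some true; tm_delta := sz_delta |}.

Lemma sz_wpos x t : cf_wpos (tm_run szTM x [::] t) = 0.
Proof.
elim: t => [|t IH] //.
rewrite /tm_run iterS -/(tm_run szTM x [::] t) /tm_step.
case: (tm_halt _) => //.
rewrite /= /sz_delta.
case: (cf_state _) => [[]|] /=; rewrite ?IH //.
by case: (read_tape _ _).
Qed.

Lemma sz_scan x j : j <= size x ->
  [/\ cf_state (tm_run szTM x [::] j.+1) = Some false,
      cf_ipos (tm_run szTM x [::] j.+1) = j.+1 &
      cf_out (tm_run szTM x [::] j.+1) = nseq j tt].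
Proof.
elim: j => [|j IH] Hj.
  by rewrite /tm_run /= /tm_step /=; split => //; lia.
have [h1 h2 h3] := IH (ltnW Hj).
rewrite /tm_run iterS -/(tm_run szTM x [::] j.+1).
move: (tm_run szTM x [::] j.+1) h1 h2 h3 => c h1 h2 h3.
rewrite /tm_step h1 /= h2 /read_tape /=.
case E: (onth x j) => [s|]; last first.
  by move: (onthTE x j); rewrite E Hj.
rewrite /= h3; split => //.
  rewrite /minn; case: ifP => //; lia.
by clear; elim: j => //= j ->.
Qed.

Lemma sz_computes x : computes_within szTM x [::] (nseq (size x) tt)
   (pbound 2 1 (size x)) (logbound 1 (size x)).
Proof.
have [h1 h2 h3] := @sz_scan x _ (leqnn (size x)).
exists (size x).+2; split.
- rewrite /pbound; lia.
- rewrite /tm_run iterS -/(tm_run szTM x [::] (size x).+1).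
  move: (tm_run szTM x [::] (size x).+1) h1 h2 h3 => c h1 h2 h3.
  by rewrite /tm_step h1 /= h2 /read_tape /= onth_default.
- rewrite /tm_run iterS -/(tm_run szTM x [::] (size x).+1).
  move: (tm_run szTM x [::] (size x).+1) h1 h2 h3 => c h1 h2 h3.
  by rewrite /tm_step h1 /= h2 /read_tape /= onth_default //= h3 cats0.
- move=> t' _; rewrite sz_wpos /logbound; lia.
Qed.

End SizeTM.

Lemma size_lc (Σ : finType) : logspace_computable (fun x : seq Σ => size x).
Proof. exists (szTM Σ), 2, 1 => x /=. apply: (cw_mono _ _ (sz_computes x)) => //.
rewrite /logbound; lia. Qed.
End TMM.
Import TMM.

Lemma nn_le n : n * n <= Q 1 2 n.
Proof. rewrite /Q mul1n !expnS expn0; nia. Qed.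

Theorem proposition3p3 :
  (forall (Σ : finType) (L : seq Σ -> Prop) (m : seq Σ -> nat),
      para_LOGCFL_poly L m -> PHSP L m -> para_LOGDCFL_poly L m)
  <->
  (forall (Σ : finType) (L : seq Σ -> Prop),
      LOGCFL_poly L -> LOGDCFL_poly L).
Proof.
split.
- move=> H1 Σ L [Γ [f [B [[A [M [h [c [k [hh hc]]]]]] [Bcf HL]]]]].
  have P : para_LOGCFL_poly L (fun x => size x).
    exists Γ, f, B; split; last by split.
    split; first exact: size_lc.
    exists A, M, h, c, k; split => x.
      apply: leq_trans (hh _) _; apply: pbound_mono => //; nia.
    apply: cw_mono (hc x); [apply: pbound_mono|apply: logbound_mono] => //; nia.
  have PH : PHSP L (fun x => size x).
    by exists 1, 1 => x; rewrite /pbound expn1; lia.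
  have [Γ' [f' [B' [[_ [A' [M' [h' [c' [k' [hh' hc']]]]]]] [Bd HL']]]]] :=
    H1 _ L _ P PH.
  have [C [K HP]] := pbound_poly c' k' 1 2.
  have [CL HLb] := logbound_poly c' 1 2.
  exists Γ', f', B'; split; last by split.
  exists A', M', (fun n => if size (h' n) <= pbound C K n then h' n else [::]),
    (maxn C CL), K; split.
    move=> n; case: ifP => // H; apply: leq_trans H _.
    apply: pbound_mono => //; exact: leq_maxl.
  move=> x.
  have e : size (h' (size x)) <= pbound C K (size x).
    exact: leq_trans (hh' x) (HP _ _ (nn_le _)).
  rewrite e; apply: cw_mono (hc' x).
    apply: leq_trans (HP _ _ (nn_le _)) _; apply: pbound_mono => //; exact: leq_maxl.
  apply: leq_trans (HLb _ _ (nn_le _)) _; apply: logbound_mono => //; exact: leq_maxr.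
- move=> H2 Σ L m [Γ [f [B [[Hlc [A [M [h [c [k [hh hc]]]]]]] [Bcf HL]]]]] [c0 [k0 Hph]].
  have [c1 [k1 Hm]] := lc_bound Hlc.
  have mn x : m x * size x <= Q (2 * c1) k1.+1 (size x).
    apply: leq_trans (Q_mul _ _ _).
    apply: leq_mul => //; exact: leq_trans (Hm x) (pbound_Q _ _ _).
  have [C [K HP]] := pbound_poly c k (2 * c1) k1.+1.
  have [CL HLb] := logbound_poly c (2 * c1) k1.+1.
  have LC : LOGCFL_poly L.
    exists Γ, f, B; split; last by split.
    exists A, M, (fun n => if size (h n) <= pbound C K n then h n else [::]),
      (maxn C CL), K; split.
      move=> n; case: ifP => // H; apply: leq_trans H _.
      apply: pbound_mono => //; exact: leq_maxl.
    move=> x.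
    have e : size (h (size x)) <= pbound C K (size x).
      exact: leq_trans (hh x) (HP _ _ (mn x)).
    rewrite e; apply: cw_mono (hc x).
      apply: leq_trans (HP _ _ (mn x)) _; apply: pbound_mono => //; exact: leq_maxl.
    apply: leq_trans (HLb _ _ (mn x)) _; apply: logbound_mono => //; exact: leq_maxr.
  have [Γ' [f' [B' [[A' [M' [h' [c' [k' [hh' hc']]]]]] [Bd HL']]]]] := H2 _ L LC.
  exists Γ', f', B'; split; last by split.
  split; first exact: Hlc.
  set N0 := pbound c0 k0 0.
  set D := c' + pbound c' k' N0 + logbound c' N0.
  have key x : pbound c' k' (size x) <= pbound D k' (m x * size x) /\
               logbound c' (size x) <= logbound D (m x * size x).
    case: (posnP (m x)) => Hm0.
      have hs : size x <= N0 by have := Hph x; rewrite Hm0.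
      rewrite Hm0 mul0n; split.
        apply: leq_trans (pbound_mono c' c' k' _ _ (leqnn c') hs) _.
        rewrite /D /pbound; lia.
      apply: leq_trans (logbound_mono c' c' _ _ (leqnn c') hs) _.
      rewrite /D /logbound trunc_log0; lia.
    have hs : size x <= m x * size x by apply: leq_pmull.
    split; [apply: pbound_mono|apply: logbound_mono] => //; rewrite /D; lia.
  exists A', M', h', D, k'; split => x.
    exact: leq_trans (hh' (size x)) (key x).1.
  exact: cw_mono (key x).1 (key x).2 (hc' x).
Qed.
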